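(* Let $T$ be a tree rooted at a vertex $v$ and let $\bar T$ be a pruning of $T$ (as defined in the context). Then for every maximum dissociation set $\bar F$ of $\bar T$ there exists a maximum dissociation set $F$ of $T$ such that $v\in F$ if and only if $v\in \bar F$. Conversely, for every maximum dissociation set $F$ of $T$ there exists a maximum dissociation set $\bar F$ of $\bar T$ such that $v\in \bar F$ if and only if $v\in F$.
   Context: All graphs are finite, simple and undirected. A dissociation set of a graph $G$ is a set $F\subseteq V(G)$ such that $G[F]$ has maximum degree at most $1$; a maximum dissociation set is one of maximum cardinality. In a rooted tree, for a vertex $u$, $C(u)$ is the set of children of $u$, $D[u]$ is the set consisting of $u$ and all its descendants, and $T_u$ is the subtree induced by $D[u]$. A branch vertex is a vertex of degree at least $3$. Pruning: let $T$ be rooted at $v$. While the current tree has a branch vertex different from $v$, choose such a branch vertex $u\ne v$ at maximum distance from $v$; then every proper descendant of $u$ has degree at most $2$, so for each child $w$ of $u$ the subtree $T_w$ is a path with end vertex $w$, and for $i\in\{0,1,2\}$ let $C^i(u)$ be the set of children $w$ of $u$ such that $|V(T_w)|\equiv i \pmod 3$. Perform the following step (a pruning at $u$): if $|C^2(u)|\ge 1$ or $|C^1(u)|\ge 2$, delete all vertices of $D[u]$; if $|C^2(u)|=0$ and $|C^1(u)|\le 1$, delete all vertices of $D[w]$ for every $w\in C(u)\setminus\{z\}$, where $z$ is the unique vertex of $C^1(u)$ if $|C^1(u)|=1$ and $z$ is an arbitrary child of $u$ otherwise. When no branch vertex other than $v$ remains, the resulting tree $\bar T$ (rooted at $v$,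 in which every vertex other than $v$ has degree at most $2$) is called a pruning of $T$. *)

(* Defs.v *)
From mathcomp Require Import all_boot.
Set Implicit Arguments.
Unset Strict Implicit.
Unset Printing Implicit Defensive.

(* A finite simple graph is a symmetric irreflexive relation [e] on a finType.
   Subgraphs considered are induced subgraphs G[S] for S : {set T}. *)
Section Defs.
Variable T : finType.
Variable e : rel T.

Definition adj (S : {set T}) : rel T := fun x y => [&& x \in S, y \in S & e x y].

Definition connected_in (S : {set T}) : Prop :=
  forall x y, x \in S -> y \in S -> connect (adj S) x y.

Definition acyclic_in (S : {set T}) : Prop :=
  forall c : seq T, uniq c -> 2 < size c -> {subset c <= S} -> ~~ cycle e c.

Definition is_tree (S : {set T}) : Prop :=
  S != set0 /\ connected_in S /\ acyclic_in S.

Definition deg (S : {set T}) (x : T) : nat := #|[set y in S | e x y]|.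

Definition branch (S : {set T}) (x : T) : bool := (x \in S) && (2 < deg S x).

(* D[u] in the tree G[S] rooted at v: the vertices w of S such that u lies on
   the v-w path, i.e. w is not joined to v in G[S \ u]. *)
Definition desc (S : {set T}) (v u : T) : {set T} :=
  [set w in S | ~~ ((v \in S :\ u) && connect (adj (S :\ u)) v w)].

Definition children (S : {set T}) (v u : T) : {set T} :=
  [set w in desc S v u | e u w && (w != u)].

Definition is_dist (S : {set T}) (x y : T) (n : nat) : Prop :=
  (exists p, [/\ path (adj S) x p, last x p = y & size p = n]) /\
  (forall p, path (adj S) x p -> last x p = y -> n <= size p).

Definition Cmod (S : {set T}) (v u : T) (i : nat) : {set T} :=
  [set w in children S v u | #|desc S v w| %% 3 == i].

Definition prune_at (S : {set T}) (v u : T) (S' : {set T}) : Prop :=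
  if (0 < #|Cmod S v u 2|) || (1 < #|Cmod S v u 1|) then S' = S :\: desc S v u
  else exists2 z, z \in children S v u &
        (Cmod S v u 1 = [set z] \/ Cmod S v u 1 = set0) /\
        S' = S :\: \bigcup_(w in children S v u :\ z) desc S v w.

Definition prune_step (v : T) (S S' : {set T}) : Prop :=
  exists u, [/\ branch S u, u != v,
    (forall w n m, branch S w -> w != v -> is_dist S v w n -> is_dist S v u m -> n <= m)
    & prune_at S v u S'].

Inductive pruning (v : T) : {set T} -> {set T} -> Prop :=
| pruning_done S : (forall u, u != v -> ~~ branch S u) -> pruning v S S
| pruning_step S S1 S2 : prune_step v S S1 -> pruning v S1 S2 -> pruning v S S2.

Definition dissociation (S F : {set T}) : bool :=
  (F \subset S) && [forall x in F, #|[set y in F | e x y]| <= 1].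

Definition max_dissociation (S F : {set T}) : Prop :=
  dissociation S F /\ forall F', dissociation S F' -> #|F'| <= #|F|.

End Defs.

(* Main.v *)
Require Import Defs.
From mathcomp Require Import all_boot.
From mathcomp Require Import zify.
Set Implicit Arguments.
Unset Strict Implicit.
Unset Printing Implicit Defensive.

Section Basic.
Variable (T : finType) (e : rel T).
Hypothesis esym : symmetric e.
Hypothesis eirr : irreflexive e.

Lemma adjE (A : {set T}) x y : adj e A x y = [&& x \in A, y \in A & e x y].
Proof. by []. Qed.

Lemma adj_sym (A : {set T}) : symmetric (adj e A).
Proof. by move=> x y; rewrite !adjE esym; case: (x \in A); case: (y \in A). Qed.

Lemma adj_e (A : {set T}) x y : adj e A x y -> e x y.
Proof. by case/and3P. Qed.

Lemma path_adj_all (A : {set T}) x (p : seq T) : x \in A -> path (adj e A) x p -> all (mem A) (x :: p).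
Proof.
elim: p x => [|y p IH] x xA /=; first by rewrite xA.
by case/andP=> /and3P[_ yA _] /(IH _ yA) /= ->; rewrite xA.
Qed.

Lemma path_adj_e (A : {set T}) x p : path (adj e A) x p -> path e x p.
Proof. by apply: sub_path => a b; apply: adj_e. Qed.

Lemma path_adj_sub (A B : {set T}) x p : {subset A <= B} -> path (adj e A) x p -> path (adj e B) x p.
Proof.
move=> AB; apply: sub_path => a b /and3P[aA bA ab].
by rewrite adjE (AB _ aA) (AB _ bA).
Qed.

Lemma path_avoid (A : {set T}) c x (p : seq T) : x \in A -> c \notin x :: p -> path (adj e A) x p ->
  path (adj e (A :\ c)) x p.
Proof.
move=> xA cp pp; have := path_adj_all xA pp => allA.
apply: (@sub_in_path _ [pred y | (y \in A) && (y != c)] (adj e A)).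
  move=> a b aP bP /and3P[_ _ ab]; move: aP bP; rewrite !inE => /andP[aA ac] /andP[bA bc].
  by rewrite adjE !inE ac aA bc bA.
apply/allP=> y yp; have := allP allA y yp; rewrite !inE /= => ->.
rewrite andTb.
  by apply: contraNneq cp => <-.
exact: pp.
Qed.

Lemma last_in_adj (A : {set T}) x (p : seq T) : path (adj e A) x p -> p != [::] -> last x p \in A.
Proof.
case/lastP: p => // q y; rewrite rcons_path last_rcons => /andP[_ /and3P[]] //.
Qed.

Lemma pref_connect (r : rel T) a p1 c (p2 : seq T) : path r a (p1 ++ c :: p2) -> connect r a c.
Proof.
rewrite cat_path => /andP[h1 /= /andP[h2 _]].
apply/connectP; exists (rcons p1 c); first by rewrite rcons_path h1.
by rewrite last_rcons.
Qed.

Lemma suff_path (r : rel T) a (p1 : seq T) c p2 : path r a (p1 ++ c :: p2) -> path r c p2.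
Proof. by rewrite cat_path => /andP[_ /= /andP[]]. Qed.

End Basic.

Fixpoint ipath (T : eqType) (e : rel T) (s : seq T) : Prop :=
  if s is x :: t then (forall y, y \in t -> e x y -> y = head x t) /\ ipath e t else True.

Lemma card3 (T : finType) (a b c : T) : a != b -> a != c -> b != c -> #|[set a; b; c]| = 3.
Proof.
move=> ab ac bc; rewrite -setUA cardsU1 cards2 !inE.
by rewrite (negbTE ab) (negbTE ac) bc.
Qed.

Lemma uniq_cat_notin (T : eqType) (s1 s2 : seq T) x : uniq (s1 ++ s2) -> x \in s2 -> x \notin s1.
Proof.
rewrite cat_uniq => /and3P[_ /hasPn H _] xs2; exact: H.
Qed.


Section Count.
Variable (T : finType) (e : rel T).
Hypothesis esym : symmetric e.
Hypothesis eirr : irreflexive e.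

Definition f3 n := n - n %/ 3.

Lemma count_bound (F : pred T) (s : seq T) : uniq s -> sorted e s ->
  (forall y a b, F y -> F a -> F b -> a != b -> e y a -> e y b -> False) ->
  count F s <= f3 (size s).
Proof.
move=> + + H; rewrite /f3.
elim: {s}_.+1 {-2}s (ltnSn (size s)) => // n IH [|a [|b [|c t]]] lt U so //=.
- by case: (F a).
- by case: (F a); case: (F b).
move: so => /= /and3P[eab ebc pt].
have Ut : uniq t by move: U => /= /and4P[_ _ _ ->].
have ac : a != c by apply: contraTneq U => ->; rewrite /= !inE eqxx !orbT.
have st : sorted e t by apply: path_sorted pt.
have := IH t _ Ut st; rewrite ltnS in lt.
have l3 : size t < n by move: lt => /=; lia.
move=> /(_ l3) ct.
have h3 : F a + F b + F c <= 2.
  case Fa : (F a); case Fb : (F b); case Fc : (F c) => //.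
  exfalso; apply: (H b a c) => //; by rewrite esym.
lia.
Qed.

Fixpoint pat (s : seq T) : seq T :=
  if s is x :: t then (if size s %% 3 != 0 then x :: pat t else pat t) else [::].

Lemma pat_sub s : {subset pat s <= s}.
Proof.
elim: s => //= x t IH y; case: ifP => _; rewrite ?inE.
  by case/orP => [->|/IH ->] //; rewrite orbT.
by move/IH ->; rewrite orbT.
Qed.

Lemma pat_uniq s : uniq s -> uniq (pat s).
Proof.
elim: s => //= x t IH /andP[xt ut]; case: ifP => _ //=; last exact: IH.
rewrite IH // andbT; apply: contra xt; exact: pat_sub.
Qed.

Lemma size_pat s : size (pat s) = f3 (size s).
Proof.
rewrite /f3; elim: s => //= x t IH; case: ifP => /=; rewrite ?IH.
  move=> /eqP h; lia.
move=> /negbFE /eqP h; lia.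
Qed.

Lemma pat_head x t : uniq (x :: t) -> x \in pat (x :: t) -> size (x :: t) %% 3 != 0.
Proof.
move=> /= /andP[xt _]; case: ifP => // _ /pat_sub; by rewrite (negbTE xt).
Qed.

Lemma pat_cons y x t : y \in pat (x :: t) -> y != x -> y \in pat t.
Proof. by rewrite /=; case: ifP => // _; rewrite inE => /orP[/eqP ->|]; rewrite ?eqxx. Qed.

Lemma pat_diss s : uniq s -> ipath e s ->
  forall y a b, y \in pat s -> a \in pat s -> b \in pat s -> a != b -> e y a -> e y b -> False.
Proof.
elim: s => // x t IH U [Hx It] y a b yP aP bP ab eya eyb.
have Ut : uniq t by case/andP: U.
have xt : x \notin t by case/andP: U.
have nb : forall w, w \in t -> e w x -> w = head x t.
  by move=> w wt ewx; apply: Hx => //; rewrite esym.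
have main : forall a' b', a' != b' -> y \in pat (x :: t) -> a' \in pat (x :: t) ->
    b' \in pat (x :: t) -> a' = x -> e y a' -> e y b' -> False.
  move=> a' b' ab' yP' aP' bP' ax'; subst a'; move=> eyx eyb'.
  have yx : y != x by apply: contraTneq eyx => ->; rewrite eirr.
  have yt : y \in t := pat_sub (pat_cons yP' yx).
  have yh := nb y yt eyx.
  move: yt; case tE: t => [|c t'] // _; subst t.
  simpl in yh; subst y.
  have bx : b' != x by rewrite eq_sym.
  have bc : b' != c by apply: contraTneq eyb' => ->; rewrite eirr.
  have bP2 := pat_cons (pat_cons bP' bx) bc.
  case: It => Hc It'.
  have bt' : b' \in t' := pat_sub bP2.
  have bh := Hc b' bt' eyb'.
  move: bt'; case t'E: t' => [|c' t''] // _; subst t'.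
  simpl in bh; subst b'.
  have h1 := pat_head U aP'.
  have cP : c \in pat (c :: c' :: t'') := pat_cons yP' yx.
  have h2 := pat_head Ut cP.
  have Ut' : uniq (c' :: t'') by case/andP: Ut.
  have h3 := pat_head Ut' bP2.
  move: h1 h2 h3 => /= /eqP h1 /eqP h2 /eqP h3.
  move: (size t'') h1 h2 h3 => k; rewrite -[k.+3]addn3 -[k.+2]addn2 -[k.+1]addn1 => h1 h2 h3; clear -h1 h2 h3; lia.
case ax : (a == x); first by apply: (main a b) => //; apply/eqP.
case bx : (b == x).
  by apply: (main b a) => //; [rewrite eq_sym | apply/eqP].
case yx : (y == x).
  move/eqP: yx => yx; subst y.
  have at' : a \in t := pat_sub (pat_cons aP (negbT ax)).
  have bt' : b \in t := pat_sub (pat_cons bP (negbT bx)).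
  have ha := Hx a at' eya; have hb := Hx b bt' eyb.
  by rewrite ha hb eqxx in ab.
exact: (IH Ut It y a b (pat_cons yP (negbT yx)) (pat_cons aP (negbT ax)) (pat_cons bP (negbT bx)) ab eya eyb).
Qed.

End Count.

Section GL.
Variable (T : finType) (e : rel T) (v : T).
Hypothesis esym : symmetric e.

Definition EqMD (S S1 : {set T}) : Prop :=
 (forall Fb, max_dissociation e S1 Fb -> exists F, max_dissociation e S F /\ (v \in F <-> v \in Fb)) /\
 (forall F, max_dissociation e S F -> exists Fb, max_dissociation e S1 Fb /\ (v \in Fb <-> v \in F)).

Lemma EqMD_refl S : EqMD S S.
Proof. by split => F mF; exists F. Qed.

Lemma EqMD_trans S1 S2 S3 : EqMD S1 S2 -> EqMD S2 S3 -> EqMD S1 S3.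
Proof.
move=> [h1 h2] [h3 h4]; split.
  move=> F3 /h3 [F2 [m2 i2]]; have [F1 [m1 i1]] := h1 _ m2; exists F1; split => //; tauto.
move=> F1 /h2 [F2 [m2 i2]]; have [F3 [m3 i3]] := h4 _ m2; exists F3; split => //; tauto.
Qed.

Lemma GL (S S1 G : {set T}) : S1 \subset S -> v \in S1 -> G \subset S :\: S1 ->
  (forall F, dissociation e S F -> #|F :\: S1| <= #|G|) ->
  (forall x, x \in G -> #|[set y in G | e x y]| <= 1) ->
  (forall x y, x \in G -> y \in S1 -> ~~ e x y) ->
  EqMD S S1.
Proof.
move=> S1S vS1 GS Hb Gd noe.
have GS1 : forall y, y \in G -> y \notin S1.
  by move=> y /(subsetP GS); rewrite in_setD => /andP[].
have du : forall F', dissociation e S1 F' -> dissociation e S (F' :|: G).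
  move=> F' /andP[F'S1 /forall_inP dF']; apply/andP; split.
    rewrite subUset (subset_trans F'S1 S1S) /=.
    by apply: (subset_trans GS); apply: subsetDl.
  apply/forall_inP => x; rewrite in_setU => /orP[xF|xG].
    have -> : [set y in F' :|: G | e x y] = [set y in F' | e x y].
      apply/setP => y; rewrite !inE; case yG : (y \in G); rewrite ?orbF //.
      have := noe y x yG (subsetP F'S1 x xF); rewrite esym => /negbTE ->.
      by rewrite !andbF.
    exact: dF'.
  have -> : [set y in F' :|: G | e x y] = [set y in G | e x y].
    apply/setP => y; rewrite !inE; case yF : (y \in F') => //=.
    by rewrite (negbTE (noe x y xG (subsetP F'S1 y yF))) andbF.
  exact: Gd.
have dr : forall F, dissociation e S F -> dissociation e S1 (F :&: S1).
  move=> F /andP[FS /forall_inP dF]; apply/andP; split; first exact: subsetIr.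
  apply/forall_inP => x; rewrite in_setI => /andP[xF _].
  apply: leq_trans (dF x xF); apply: subset_leq_card; apply/subsetP => y.
  by rewrite !inE => /andP[/andP[-> _] ->].
have cardU : forall F' : {set T}, F' \subset S1 -> #|F' :|: G| = #|F'| + #|G|.
  move=> F' F'S1; rewrite cardsU.
  have -> : F' :&: G = set0.
    apply/setP => y; rewrite !inE; apply/negP => /andP[yF yG].
    by move: (GS1 y yG); rewrite (subsetP F'S1 y yF).
  by rewrite cards0 subn0.
have cardF : forall F : {set T}, #|F| = #|F :&: S1| + #|F :\: S1|.
  by move=> F; rewrite cardsID.
split.
  move=> Fb [dFb maxFb]; exists (Fb :|: G); split; first split.
  - exact: du.
  - move=> F' dF'; rewrite cardU; last by case/andP: dFb.
    rewrite cardF; apply: leq_add; [exact: maxFb (dr _ dF') | exact: Hb].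
  - rewrite in_setU; split => [/orP[]//|->//].
    by move/GS1; rewrite vS1.
move=> F [dF maxF]; exists (F :&: S1); split; first split.
- exact: dr.
- move=> F' dF'; have := maxF _ (du _ dF'); rewrite cardU; last by case/andP: dF'.
  rewrite (cardF F) => h; have := Hb F dF; lia.
- by rewrite in_setI vS1 andbT.
Qed.

End GL.

Lemma sum_ind (T : finType) (A B : {set T}) :
  \sum_(y in A) (y \in B : nat) = #|A :&: B|.
Proof.
rewrite -sum1_card (big_mkcond (fun y => y \in A :&: B)) /= big_mkcond /=.
apply: eq_bigr => y _; rewrite in_setI; by case: (y \in A); case: (y \in B).
Qed.

Lemma dec_sum (T : finType) (Df : T -> {set T}) (W A : {set T}) :
  (forall w1 w2 y, w1 \in W -> w2 \in W -> w1 != w2 -> y \in Df w1 -> y \in Df w2 -> False) ->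
  (forall y, y \in A -> exists2 w, w \in W & y \in Df w) ->
  #|A| = \sum_(w in W) #|A :&: Df w|.
Proof.
move=> disj cov.
have one : forall y, y \in A -> \sum_(w in W) (y \in Df w : nat) = 1.
  move=> y yA; have [w0 w0W yw0] := cov y yA.
  rewrite (bigD1 w0) //= yw0 big1 // => w /andP[wW ww0].
  case yw : (y \in Df w) => //; exfalso; exact: (disj w w0 y).
rewrite -sum1_card (eq_bigr (fun y => \sum_(w in W) (y \in Df w : nat))); last first.
  by move=> y yA; rewrite one.
rewrite exchange_big /=; apply: eq_bigr => w _; exact: sum_ind.
Qed.
Section Tree.
Variable (T : finType) (e : rel T) (v : T).
Hypothesis esym : symmetric e.
Hypothesis eirr : irreflexive e.
Hypothesis eacyc : acyclic_in e [set: T].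
Variable S : {set T}.
Hypothesis vS : v \in S.
Hypothesis Sconn : forall x, x \in S -> connect (adj e S) v x.

Local Notation D := (desc e S v).

Lemma inD y x : (y \in D x) = (y \in S) && ~~ ((v \in S :\ x) && connect (adj e (S :\ x)) v y).
Proof. by rewrite inE. Qed.

Lemma D_sub x y : y \in D x -> y \in S.
Proof. by rewrite inD => /andP[]. Qed.

Lemma e_neq x y : e x y -> x != y.
Proof. by apply: contraTneq => ->; rewrite eirr. Qed.

Lemma D_self x : x \in S -> x \in D x.
Proof.
move=> xS; rewrite inD xS /=; apply/negP => /andP[vx /connectP[p pp lp]].
have vnx : v != x by move: vx; rewrite !inE => /andP[].
have pn : p != [::] by apply: contra vnx => /eqP pn; rewrite lp pn.
by have := last_in_adj pp pn; rewrite -lp !inE eqxx.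
Qed.

Lemma R_notD x y : v \in S :\ x -> connect (adj e (S :\ x)) v y -> y \notin D x.
Proof. by move=> vx c; rewrite inD vx c andbF. Qed.

Lemma notD_R x y : y \in S -> y \notin D x ->
  (v \in S :\ x) /\ connect (adj e (S :\ x)) v y.
Proof. by move=> yS; rewrite inD yS /= negbK => /andP[? ?]; split. Qed.

Lemma v_notD x : x != v -> v \notin D x.
Proof. by move=> xv; apply: R_notD; rewrite ?connect0 // !inE eq_sym xv vS. Qed.

Lemma conn_in (A : {set T}) a b : a \in A -> connect (adj e A) a b -> b \in A.
Proof.
move=> aA /connectP [p pp ->]; have /allP := path_adj_all aA pp; apply; exact: mem_last.
Qed.

Lemma D_edge x y z : y \in D x -> z \in S -> z \notin D x -> e y z -> y = x.
Proof.
move=> yD zS /(notD_R zS) [vx cz] eyz; apply/eqP; apply/negPn/negP => yx.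
have yS := D_sub yD.
have : y \notin D x.
  apply: R_notD => //; apply: (connect_trans cz); apply: connect1.
  by rewrite adjE (conn_in vx cz) !inE yx yS esym eyz.
by rewrite yD.
Qed.

Lemma upath x : x \in S -> exists p, [/\ path (adj e S) v p, last v p = x & uniq (v :: p)].
Proof.
move=> /Sconn /connectP [p pp ->]; case: (shortenP pp) => q qp uq _.
by exists q.
Qed.

Lemma pred_path (A : {set T}) a q b : a \in A -> path (adj e A) a q -> uniq (a :: q) ->
  last a q = b -> a != b ->
  exists2 pp, pp \in A & connect (adj e (A :\ b)) a pp && e pp b.
Proof.
move=> aA; case/lastP: q => [|q y]; first by move=> _ _ /= ->; rewrite eqxx.
rewrite last_rcons rcons_path => /andP[pq ady] U yb ab; subst b.
have bq : y \notin a :: q.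
  by move: U; rewrite -rcons_cons rcons_uniq => /andP[].
have := path_adj_all aA pq => /allP allA.
exists (last a q); first by apply: allA; exact: mem_last.
move: ady => /and3P[_ _ ->]; rewrite andbT.
apply/connectP; exists q => //; exact: path_avoid.
Qed.

Lemma parent x : x \in S -> x != v -> exists p, [/\ p \in S, p \notin D x & e x p].
Proof.
move=> xS xv; have [p [pp lp up]] := upath xS.
have vx : v != x by rewrite eq_sym.
have [pp' pS /andP[c epx]] := pred_path vS pp up lp vx.
exists pp'; split => //; last by rewrite esym.
apply: R_notD => //; by rewrite !inE eq_sym xv vS.
Qed.

Lemma parent_uniq x p1 p2 : p1 \in S -> p2 \in S -> p1 \notin D x -> p2 \notin D x ->
  e x p1 -> e x p2 -> p1 = p2.
Proof.
move=> p1S p2S /(notD_R p1S) [vx c1] /(notD_R p2S) [_ c2] e1 e2.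
apply/eqP/negPn/negP => p12.
have c12 : connect (adj e (S :\ x)) p1 p2.
  apply: (connect_trans _ c2); rewrite (sym_connect_sym (adj_sym esym (S :\ x))); exact: c1.
case/connectP: c12 => q qp lq.
move: lq; case: (shortenP qp) => q' qp' uq' _ lq'.
have p1x : p1 \in S :\ x by rewrite !inE p1S eq_sym e_neq.
have allq := path_adj_all p1x qp'.
have xq : x \notin p1 :: q'.
  by apply/negP => /(allP allq); rewrite !inE eqxx.
have q'n : q' != [::] by apply: contra p12 => /eqP qn; rewrite lq' qn.
have U : uniq (x :: p1 :: q') by rewrite cons_uniq xq uq'.
have sz : 2 < size (x :: p1 :: q') by case: q' q'n {qp' uq' lq' allq xq U} => // ? ?.
have sb : {subset (x :: p1 :: q') <= [set: T]} by move=> ? _; rewrite inE.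
move/negP: (eacyc U sz sb); apply.
by rewrite /= e1 /= rcons_path (path_adj_e qp') /= -lq' esym e2.
Qed.

Lemma child_of_parent x p : x \in S -> x != v -> p \in S -> p \notin D x -> e x p -> x \in D p.
Proof.
move=> xS xv pS pnD exp; rewrite inD xS /=; apply/negP => /andP[vp /connectP[q qp lq]].
move: lq; case: (shortenP qp) => q' qp' uq' _ lq'.
have vpS : v \in S :\ p by [].
have vx : v != x by rewrite eq_sym.
have [pp ppA /andP[cpp epp]] := pred_path vpS qp' uq' (Logic.eq_sym lq') vx.
have ppS : pp \in S by move: ppA; rewrite !inE => /andP[].
have ppD : pp \notin D x.
  apply: R_notD; first by rewrite !inE eq_sym xv vS.
  apply: connect_sub cpp => a b ab; apply: connect1.
  move: ab; rewrite !adjE => /and3P[aA bA ->]; rewrite andbT.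
  by move: aA bA; rewrite !inE => /and3P[-> _ ->] /and3P[-> _ ->].
have := parent_uniq ppS pS ppD pnD _ exp; rewrite esym => /(_ epp) ppp.
by move: ppA; rewrite ppp !inE eqxx.
Qed.

Lemma D_mono c x : c \in D x -> c != x -> {subset D c <= D x}.
Proof.
move=> cD cx y yD; rewrite inD (D_sub yD) /=; apply/negP => /andP[vx /connectP[P pP lP]].
have cv : c != v by apply: contraTneq cD => ->; apply: v_notD; move: vx; rewrite !inE eq_sym => /andP[].
case cP : (c \in v :: P).
  move: cP; rewrite inE (negbTE cv) /= => cP.
  move: pP lP; case/splitPr: cP => P1 P2 pP lP.
  have := pref_connect pP => cc.
  by move: cD; rewrite inD vx cc andbF.
have : y \notin D c.
  apply: R_notD; first by rewrite !inE eq_sym cv vS.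
  apply/connectP; exists P => //; apply: path_avoid; first exact: vS.
    by rewrite cP.
  by apply: path_adj_sub pP => z; rewrite !inE => /andP[].
by rewrite yD.
Qed.

Lemma D_anti a b : a \in D b -> a != b -> b \in S -> b \notin D a.
Proof.
move=> aD ab bS.
have av : a != v.
  apply/eqP => av; subst a.
  have bv : b != v by rewrite eq_sym.
  by rewrite (negbTE (v_notD bv)) in aD.
case bv : (b == v); first by move/eqP: bv => ->; exact: v_notD.
have [P [pP lP uP]] := upath bS.
case aP : (a \in P).
  move: pP lP uP; case/splitPr: aP => P1 P2 pP lP uP.
  have bP2 : b \in P2.
    move: lP; rewrite last_cat /= => lP.
    have : b \in a :: P2 by rewrite -lP mem_last.
    by rewrite inE eq_sym (negbTE ab).
  exfalso.
  have U2 : uniq ((v :: rcons P1 a) ++ P2) by rewrite cat_cons cat_rcons.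
  have bn := uniq_cat_notin U2 bP2.
  have pr : path (adj e S) v (rcons P1 a).
    by move: pP; rewrite -cat_rcons cat_path => /andP[].
  have : a \notin D b.
    apply: R_notD; first by rewrite !inE eq_sym bv vS.
    apply/connectP; exists (rcons P1 a); last by rewrite last_rcons.
    exact: path_avoid.
  by rewrite aD.
apply: R_notD; first by rewrite !inE eq_sym av vS.
apply/connectP; exists P => //; apply: path_avoid => //.
by rewrite inE (negbTE av) aP.
Qed.

Lemma par_dec y : y \in S -> y != v -> exists p,
  [/\ p \in S, p \notin D y, e y p, y \in D p & #|S :\: D p| < #|S :\: D y|].
Proof.
move=> yS yv; have [p [pS pD ep]] := parent yS yv.
have yDp := child_of_parent yS yv pS pD ep.
exists p; split => //; apply: proper_card; apply/properP; split.
  apply/subsetP => z; rewrite !in_setD => /andP[zD ->]; rewrite andbT.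
  apply/negP => zDy; move/negP: zD; apply; exact: (D_mono yDp (e_neq ep) zDy).
by exists p; rewrite !in_setD ?pS ?pD // D_self.
Qed.

Lemma meas_ind (P : T -> Prop) :
  (forall y, y \in S -> (forall z, z \in S -> #|S :\: D z| < #|S :\: D y| -> P z) -> P y) ->
  forall y, y \in S -> P y.
Proof.
move=> H y; elim: {y}_.+1 {-2}y (ltnSn #|S :\: D y|) => // n IH y lt yS.
apply: H => // z zS lz; apply: IH => //; exact: leq_trans lz _.
Qed.

Lemma anc a y : a \in S -> y \in D a -> y != a ->
  exists2 c, (c \in D a) && e a c & y \in D c.
Proof.
move=> aS yD ya; have yS := D_sub yD; move: y yS yD ya; apply: meas_ind => y yS IH yD ya.
have yv : y != v.
  apply/eqP => yv; subst y; move: yD; apply/negP; apply: v_notD; by rewrite eq_sym.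
have [p [pS pD ep yDp lt]] := par_dec yS yv.
have pDa : p \in D a.
  apply/negPn/negP => pnD; have := D_edge yD pS pnD ep; exact/eqP.
case pa : (p == a).
  move/eqP: pa => pa; subst p; exists y; last exact: D_self.
  by rewrite yD esym.
have [c /andP[cD ec] pDc] := IH p pS lt pDa (negbT pa).
exists c; first by rewrite cD ec.
case pc : (p == c); first by move/eqP: pc => <-.
exact: (D_mono pDc (negbT pc)).
Qed.

Lemma children_disj a c1 c2 y : a \in S -> c1 \in D a -> c2 \in D a -> e a c1 -> e a c2 ->
  c1 != c2 -> y \in D c1 -> y \in D c2 -> False.
Proof.
move=> aS c1D c2D e1 e2 c12.
have c1a : c1 != a by rewrite eq_sym (e_neq e1).
have c2a : c2 != a by rewrite eq_sym (e_neq e2).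
have aD1 := D_anti c1D c1a aS.
have aD2 := D_anti c2D c2a aS.
have c1D2 : c1 \notin D c2.
  apply/negP => h; have := D_edge h aS aD2; rewrite esym => /(_ e1) /eqP; exact/negP.
have c2D1 : c2 \notin D c1.
  apply/negP => h; have := D_edge h aS aD1; rewrite esym => /(_ e2) /eqP.
  by rewrite eq_sym; exact/negP.
have c1v : c1 != v.
  apply/eqP => c1v; subst c1.
  case av : (a == v); first by move/eqP: av c1a => ->; rewrite eqxx.
  by rewrite (negbTE (v_notD (negbT av))) in c1D.
move=> yD1; have yS := D_sub yD1; move: y yS yD1; apply: meas_ind => y yS IH yD1 yD2.
have yv : y != v by apply: contraTneq yD1 => ->; exact: v_notD.
have [p [pS pD ep yDp lt]] := par_dec yS yv.
apply: (IH p pS lt).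
  apply/negPn/negP => pn; have := D_edge yD1 pS pn ep => yc; subst y.
  by rewrite yD2 in c1D2.
apply/negPn/negP => pn; have := D_edge yD2 pS pn ep => yc; subst y.
by rewrite yD1 in c2D1.
Qed.

Lemma child_uniq x c1 c2 : x \in S -> x != v -> deg e S x <= 2 ->
  c1 \in D x -> c2 \in D x -> e x c1 -> e x c2 -> c1 = c2.
Proof.
move=> xS xv dg c1D c2D e1 e2; apply/eqP/negPn/negP => c12.
have [p [pS pD ep]] := parent xS xv.
have pc1 : p != c1 by apply: contraNneq pD => ->.
have pc2 : p != c2 by apply: contraNneq pD => ->.
have : #|[set p; c1; c2]| <= deg e S x.
  apply: subset_leq_card; apply/subsetP => z; rewrite !inE => /orP[/orP[]|] /eqP ->.
  - by rewrite pS ep.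
  - by rewrite (D_sub c1D) e1.
  - by rewrite (D_sub c2D) e2.
by rewrite card3 // => /leq_trans /(_ dg).
Qed.

Lemma path_struct x : x \in S -> x != v -> (forall y, y \in D x -> deg e S y <= 2) ->
  exists t, [/\ uniq (x :: t), path e x t, (forall y, (y \in x :: t) = (y \in D x))
             & ipath e (x :: t)].
Proof.
elim: {x}_.+1 {-2}x (ltnSn #|D x|) => // n IH x lt xS xv dg.
have dgx := dg x (D_self xS).
case: (pickP [pred c | (c \in D x) && e x c]) => [c /andP[cD ec] | none].
  have cS := D_sub cD.
  have cx : c != x by rewrite eq_sym (e_neq ec).
  have cv : c != v by apply: contraTneq cD => ->; exact: v_notD.
  have xDc := D_anti cD cx xS.
  have mono := D_mono cD cx.
  have ltc : #|D c| < #|D x|.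
    apply: proper_card; apply/properP; split; first by apply/subsetP.
    by exists x; rewrite ?D_self.
  have [t [ut pt mt it]] := IH c (leq_trans ltc lt) cS cv (fun y yD => dg y (mono y yD)).
  exists (c :: t); split.
  - by rewrite cons_uniq mt xDc ut.
  - by rewrite /= ec pt.
  - move=> y; rewrite inE mt; apply/idP/idP.
      by case/orP => [/eqP -> | /mono]; rewrite ?D_self.
    move=> yD; case yx : (y == x) => //=.
    have [c' /andP[c'D ec'] yDc'] := anc xS yD (negbT yx).
    by rewrite (child_uniq xS xv dgx cD c'D ec ec').
  - split => //= y; rewrite mt => yD exy.
    by apply: (D_edge yD xS xDc); rewrite esym.
exists [::]; split => //.
move=> y; rewrite inE; apply/idP/idP; first by move/eqP ->; exact: D_self.
move=> yD; apply/negPn/negP => yx.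
have [c' /andP[c'D ec'] _] := anc xS yD yx.
by have := none c'; rewrite /= c'D ec'.
Qed.

Lemma dist_ex x : x \in S -> exists n, is_dist e S v x n.
Proof.
move=> xS.
pose P n := [exists t : n.-tuple T, path (adj e S) v t && (last v t == x)].
have exP : exists n, P n.
  have /connectP [p pp lp] := Sconn xS.
  exists (size p); apply/existsP; exists (in_tuple p); by rewrite /= pp -lp eqxx.
case: (ex_minnP exP) => m /existsP [t /andP[pt /eqP lt]] mmin.
exists m; split; first by exists t; rewrite size_tuple.
move=> p pp lp; apply: mmin; apply/existsP; exists (in_tuple p); by rewrite /= pp lp eqxx.
Qed.


Lemma inC u w : (w \in children e S v u) = (w \in D u) && (e u w && (w != u)).
Proof. by rewrite /children in_set. Qed.

Lemma inCmod u w i : (w \in Cmod e S v u i) = (w \in children e S v u) && (#|D w| %% 3 == i).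
Proof. by rewrite /Cmod in_set. Qed.

Lemma card_seq (F B : {set T}) s : uniq s -> (forall y, (y \in s) = (y \in B)) ->
  #|F :&: B| = count (mem F) s.
Proof.
move=> U ms; rewrite -size_filter.
move/card_uniqP: (filter_uniq (mem F) U) => <-.
by apply: eq_card => y; rewrite in_setI mem_filter ms.
Qed.

Lemma card_seqD (B : {set T}) s : uniq s -> (forall y, (y \in s) = (y \in B)) -> #|B| = size s.
Proof. by move=> U ms; move/card_uniqP: U => <-; apply: eq_card => y; rewrite ms. Qed.

Lemma diss_two F : dissociation e S F -> forall y a b, y \in F -> a \in F -> b \in F ->
  a != b -> e y a -> e y b -> False.
Proof.
move=> /andP[_ /forall_inP dF] y a b yF aF bF ab ea eb.
have /card_le1_eqP h := dF y yF.
have := h a b; rewrite !inE aF bF ea eb => /(_ isT isT) abe.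
by rewrite abe eqxx in ab.
Qed.

Lemma conn_remove (X : {set T}) : v \notin X ->
  (forall y p, y \in S -> y \notin X -> y != v -> p \in S -> p \notin D y -> e y p -> p \notin X) ->
  v \in S :\: X /\ (forall x, x \in S :\: X -> connect (adj e (S :\: X)) v x).
Proof.
move=> vX cl; have vSX : v \in S :\: X by rewrite in_setD vX vS.
split => // x xSX; have xS : x \in S by move: xSX; rewrite in_setD => /andP[].
move: x xS xSX; apply: meas_ind => y yS IH ySX.
case yv : (y == v); first by move/eqP: yv => ->; exact: connect0.
have [p [pS pD ep yDp lt]] := par_dec yS (negbT yv).
have yX : y \notin X by move: ySX; rewrite in_setD => /andP[].
have pX := cl y p yS yX (negbT yv) pS pD ep.
have pSX : p \in S :\: X by rewrite in_setD pX pS.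
apply: (connect_trans (IH p pS lt pSX)); apply: connect1.
by rewrite adjE pSX ySX esym ep.
Qed.

Section Step.
Variable u : T.
Hypothesis hub : branch e S u.
Hypothesis huv : u != v.
Hypothesis hmax : forall w n m, branch e S w -> w != v -> is_dist e S v w n -> is_dist e S v u m -> n <= m.

Local Notation C := (children e S v u).

Lemma uS : u \in S.
Proof. by case/andP: hub. Qed.

Lemma nonbranch y : y \in D u -> y != u -> deg e S y <= 2.
Proof.
move=> yD yu; rewrite leqNgt; apply/negP => dy.
have yS := D_sub yD.
have yv : y != v by apply: contraTneq yD => ->; exact: v_notD.
have br : branch e S y by rewrite /branch yS dy.
have [n hn] := dist_ex yS; have [m hm] := dist_ex uS.
have nm := hmax br yv hn hm.
case: hn => [[p [pp lp sp]] _]; case: hm => [_ hm2].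
have up : u \in p.
  apply/negPn/negP => un.
  have : y \notin D u.
    apply: R_notD; first by rewrite !inE eq_sym huv vS.
    apply/connectP; exists p => //; apply: path_avoid => //.
    by rewrite inE negb_or huv un.
  by rewrite yD.
move: pp lp sp; case/splitPr: up => p1 p2 pp lp sp.
have := hm2 (rcons p1 u); rewrite last_rcons size_rcons => /(_ _ erefl) h.
have : path (adj e S) v (rcons p1 u) by move: pp; rewrite -cat_rcons cat_path => /andP[].
move=> /h {}h.
move: lp; rewrite last_cat /=; case: p2 pp sp => [|z p2] pp sp /=.
  by move=> yu'; rewrite yu' eqxx in yu.
move=> _; rewrite size_cat /= in sp; move: nm h; rewrite -sp; lia.
Qed.

Lemma childP w : w \in C -> [/\ w \in D u, e u w, w \in S, w != u & w != v].
Proof.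
rewrite inC => /and3P[wD ew wu].
have wS := D_sub wD.
have wv : w != v by apply: contraTneq wD => ->; exact: v_notD.
by split.
Qed.

Lemma childQ w : w \in C -> [/\ u \notin D w, {subset D w <= D u}
  & forall y, y \in D w -> deg e S y <= 2].
Proof.
move=> wC; have [wD ew wS wu wv] := childP wC.
have uD := D_anti wD wu uS.
have mono := D_mono wD wu.
split => // y yD; apply: nonbranch; first exact: mono.
by apply: contraNneq uD => <-.
Qed.

Lemma child_seq w : w \in C -> exists t, [/\ uniq (w :: t), path e w t,
  forall y, (y \in w :: t) = (y \in D w) & ipath e (w :: t)].
Proof.
move=> wC; have [_ _ wS _ wv] := childP wC; have [_ _ dg] := childQ wC.
exact: path_struct.
Qed.

Lemma dissH F : dissociation e S F ->
  forall y a b, y \in F -> a \in F -> b \in F -> a != b -> e y a -> e y b -> False.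
Proof. exact: diss_two. Qed.

Lemma BW w F : w \in C -> dissociation e S F -> #|F :&: D w| <= f3 #|D w|.
Proof.
move=> wC dF; have [t [U pt mt it]] := child_seq wC.
rewrite (card_seq F U mt) (card_seqD U mt).
exact: (@count_bound _ _ esym (mem F) _ U pt (dissH dF)).
Qed.

Lemma BU2 w F : w \in C -> #|D w| %% 3 = 2 -> dissociation e S F -> u \in F ->
  1 + #|F :&: D w| <= f3 #|D w|.
Proof.
move=> wC n2 dF uF; have [t [U pt mt it]] := child_seq wC.
have [_ ew _ _ _] := childP wC; have [uD _ _] := childQ wC.
have U' : uniq (u :: w :: t) by rewrite cons_uniq mt uD U.
have := @count_bound _ _ esym (mem F) _ U' _ (dissH dF).
rewrite /= ew pt => /(_ isT).
rewrite (card_seq F U mt) (card_seqD U mt) in n2 *.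
rewrite uF /f3 /= => h; move: n2 h; clear => /=; move: (w \in F : nat) (count (mem F) t) (size t) => b a k; lia.
Qed.

Lemma BN w F : w \in C -> #|D w| %% 3 = 1 -> dissociation e S F -> w \notin F ->
  1 + #|F :&: D w| <= f3 #|D w|.
Proof.
move=> wC n1 dF wF; have [t [U pt mt it]] := child_seq wC.
rewrite (card_seq F U mt) (card_seqD U mt) in n1 *.
have Ut : uniq t by case/andP: U.
have := @count_bound _ _ esym (mem F) _ Ut (path_sorted pt) (dissH dF).
rewrite /= (negbTE wF) /f3 /= => h; move: n1 h; clear => /=; move: (count (mem F) t) (size t) => a k; lia.
Qed.


Definition good w (G : {set T}) := [&& G \subset D w, #|G| == f3 #|D w|,
  [forall x in G, #|[set y in G | e x y]| <= 1] & (#|D w| %% 3 == 0) ==> (w \notin G)].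

Lemma Gw_ex w : w \in C -> exists G, good w G.
Proof.
move=> wC; have [t [U pt mt it]] := child_seq wC.
exists [set y | y \in pat (w :: t)].
have cG : #|[set y | y \in pat (w :: t)]| = size (pat (w :: t)).
  by apply: card_seqD (pat_uniq U) _ => y; rewrite inE.
apply/and4P; split.
- by apply/subsetP => y; rewrite inE => /pat_sub; rewrite mt.
- by rewrite cG size_pat -(card_seqD U mt).
- apply/forall_inP => x; rewrite inE => xP; apply/card_le1_eqP => a b.
  rewrite !inE => /andP[aP ea] /andP[bP eb]; apply/eqP/negPn/negP => ab.
  exact: (pat_diss esym eirr U it xP bP aP ab eb ea).
- apply/implyP => /eqP n0; apply/negP; rewrite inE => wP.
  by have := pat_head U wP; rewrite -(card_seqD U mt) n0.
Qed.

Definition Gw w := odflt set0 [pick G : {set T} | good w G].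

Lemma Gw_good w : w \in C -> good w (Gw w).
Proof.
move=> wC; rewrite /Gw; case: pickP => [G gG | none] //=.
by have [G gG] := Gw_ex wC; have := none G; rewrite gG.
Qed.

Lemma Gw_D w : w \in C -> {subset Gw w <= D w}.
Proof. by move/Gw_good => /and4P[/subsetP h _ _ _]. Qed.

Lemma disjC w1 w2 y : w1 \in C -> w2 \in C -> w1 != w2 -> y \in D w1 -> y \in D w2 -> False.
Proof.
move=> w1C w2C; have [w1D e1 _ _ _] := childP w1C; have [w2D e2 _ _ _] := childP w2C.
exact: (children_disj uS w1D w2D e1 e2).
Qed.

Definition GU (W : {set T}) := \bigcup_(w in W) Gw w.

Lemma GU_mem (W : {set T}) x : x \in GU W -> exists2 w, w \in W & x \in Gw w.
Proof. by move/bigcupP. Qed.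

Lemma GU_D (W : {set T}) w : W \subset C -> w \in W -> GU W :&: D w = Gw w.
Proof.
move=> WC wW; have wC := subsetP WC w wW.
apply/setP => y; rewrite in_setI; apply/andP/idP.
  case=> /GU_mem [w' w'W yG] yD.
  case ww : (w' == w); first by move/eqP: ww yG => ->.
  exfalso; apply: (disjC (subsetP WC w' w'W) wC (negbT ww) _ yD).
  exact: (Gw_D (subsetP WC w' w'W)).
move=> yG; split; last exact: Gw_D.
by apply/bigcupP; exists w.
Qed.

Lemma GU_card (W : {set T}) : W \subset C -> #|GU W| = \sum_(w in W) f3 #|D w|.
Proof.
move=> WC; rewrite (@dec_sum _ D W (GU W)).
- apply: eq_bigr => w wW; rewrite GU_D //.
  by have /and4P[_ /eqP -> _ _] := Gw_good (subsetP WC w wW).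
- move=> w1 w2 y w1W w2W; exact: disjC (subsetP WC _ w1W) (subsetP WC _ w2W).
move=> y /GU_mem [w wW yG]; exists w => //; exact: Gw_D (subsetP WC _ wW) _ yG.
Qed.

Lemma GU_int (W : {set T}) : W \subset C -> forall x, x \in GU W -> #|[set y in GU W | e x y]| <= 1.
Proof.
move=> WC x /GU_mem [w wW xG]; have wC := subsetP WC w wW.
have /and4P[_ _ /forall_inP dG _] := Gw_good wC.
apply: leq_trans (dG x xG); apply: subset_leq_card; apply/subsetP => y.
rewrite !inE => /andP[/GU_mem [w' w'W yG'] exy]; rewrite exy andbT.
have w'C := subsetP WC w' w'W.
case ww : (w' == w); first by move/eqP: ww yG' => <-.
exfalso.
have yD' := Gw_D w'C yG'.
have xD := Gw_D wC xG.
have yDw : y \notin D w by apply/negP => yD; exact: (disjC w'C wC (negbT ww) yD' yD).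
have yS := D_sub yD'.
have xw := D_edge xD yS yDw exy; subst x.
have [_ ew _ _ _] := childP wC; have [uD _ _] := childQ wC.
have ewu : e w u by rewrite esym.
have yu := parent_uniq yS uS yDw uD exy ewu.
have [uD' _ _] := childQ w'C.
by rewrite -yu yD' in uD'.
Qed.

Lemma case2_mod z w : ~~ ((0 < #|Cmod e S v u 2|) || (1 < #|Cmod e S v u 1|)) ->
  (Cmod e S v u 1 = [set z] \/ Cmod e S v u 1 = set0) -> w \in C :\ z -> #|D w| %% 3 = 0.
Proof.
rewrite negb_or -leqNgt leqn0 cards_eq0 => /andP[/eqP C2 _] hz.
rewrite in_setD1 => /andP[wz wC].
have : #|D w| %% 3 < 3 by apply: ltn_pmod.
case r : (#|D w| %% 3) => [|[|[|]]] // _.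
  have : w \in Cmod e S v u 1 by rewrite inCmod wC r.
  by case: hz => ->; rewrite !inE // (negbTE wz).
have : w \in Cmod e S v u 2 by rewrite inCmod wC r.
by rewrite C2 inE.
Qed.

Lemma sumB (W : {set T}) (a b : T -> nat) w0 : w0 \in W -> 1 + a w0 <= b w0 ->
  (forall w, w \in W -> a w <= b w) -> 1 + \sum_(w in W) a w <= \sum_(w in W) b w.
Proof.
move=> w0W h0 h; rewrite (bigD1 w0) // (bigD1 w0 (F := b)) //= addnA.
apply: leq_add => //; apply: leq_sum => w /andP[wW _]; exact: h.
Qed.

Lemma step_core S1 : prune_at e S v u S1 ->
  (v \in S1 /\ forall x, x \in S1 -> connect (adj e S1) v x) /\ EqMD e v S S1.
Proof.
have vDu : v \notin D u := v_notD huv.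
rewrite /prune_at; case: ifP => cond.
  move=> ->; split.
    apply: conn_remove => // y p yS yX yv pS pD ep; apply/negP => pX.
    have pu : p = u by apply: (D_edge pX yS yX); rewrite esym.
    have := child_of_parent yS yv pS pD ep; rewrite pu => yD.
    by rewrite yD in yX.
  apply: (GL esym (G := GU C)).
  - exact: subsetDl.
  - by rewrite in_setD vDu vS.
  - apply/subsetP => x /GU_mem [w wC xG].
    have := Gw_D wC xG => xD; have [_ mono _] := childQ wC.
    have xDu := mono x xD.
    by rewrite !in_setD xDu (D_sub xDu).
  - move=> F dF; rewrite GU_card //.
    have FS : F \subset S by case/andP: dF.
    pose A := F :&: (D u :\ u).
    have dA : #|A| = \sum_(w in C) #|F :&: D w|.
      rewrite (@dec_sum _ D C A).
      + apply: eq_bigr => w wC; apply: eq_card => y; rewrite !in_setI.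
        case yD : (y \in D w); rewrite ?andbF //= andbT.
        have [uD mono _] := childQ wC.
        rewrite in_setD1 (mono y yD) andbT.
        by case: (y \in F) => //=; apply: contraNneq uD => <-.
      + move=> w1 w2 y w1C w2C; exact: disjC.
      move=> y; rewrite !in_setI in_setD1 => /and3P[_ yu yD].
      have [c /andP[cD ec] yc] := anc uS yD yu.
      exists c => //; rewrite inC cD ec /=; by rewrite eq_sym (e_neq ec).
    have sub : F :\: (S :\: D u) \subset (if u \in F then u |: A else A).
      apply/subsetP => y; rewrite !in_setD negb_and negbK => /andP[/orP[yD|yS] yF]; last first.
        by rewrite (subsetP FS y yF) in yS.
      case yu : (y == u); first by move/eqP: yu yF => -> ->; rewrite setU11.
      have yA : y \in A by rewrite !in_setI in_setD1 yu yF yD.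
      by case: (u \in F); rewrite ?setU1r.
    have := subset_leq_card sub.
    case uF : (u \in F) => h; last first.
      apply: (leq_trans h); rewrite dA; apply: leq_sum => w wC; exact: BW.
    apply: (leq_trans h); rewrite cardsU1 dA.
    have k : 1 + \sum_(w in C) #|F :&: D w| <= \sum_(w in C) f3 #|D w|.
      case/orP: cond => [/card_gt0P [w0 w0C2] | /card_gt1P [w1 [w2 [w1C1 w2C1 w12]]]].
        move: w0C2; rewrite inCmod => /andP[w0C /eqP r].
        apply: (sumB w0C); first exact: BU2.
        by move=> w wC; exact: BW.
      move: w1C1 w2C1; rewrite !inCmod => /andP[w1C /eqP r1] /andP[w2C /eqP r2].
      have [_ e1 _ _ _] := childP w1C; have [_ e2 _ _ _] := childP w2C.
      case w1F : (w1 \in F).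
        case w2F : (w2 \in F).
          by exfalso; exact: (diss_two dF uF w1F w2F w12 e1 e2).
        apply: (sumB w2C); first by apply: BN => //; rewrite w2F.
        by move=> w wC; exact: BW.
      apply: (sumB w1C); first by apply: BN => //; rewrite w1F.
      by move=> w wC; exact: BW.
    by apply: leq_trans k; rewrite leq_add2r leq_b1.
  - exact: GU_int.
  - move=> x y /GU_mem [w wC xG] yS1; apply/negP => exy.
    have xD := Gw_D wC xG; have [uD mono _] := childQ wC.
    move: yS1; rewrite in_setD => /andP[yDu yS].
    have xu := D_edge (mono x xD) yS yDu exy; subst x.
    by rewrite xD in uD.
case=> z zC [hz ->].
pose W := C :\ z.
have WC : W \subset C by apply/subsetP => w; rewrite in_setD1 => /andP[].
pose X := \bigcup_(w in W) D w.
have vX : v \notin X.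
  apply/negP => /bigcupP [w wW vD].
  have [_ _ _ _ wv] := childP (subsetP WC w wW).
  by rewrite (negbTE (v_notD wv)) in vD.
split.
  apply: conn_remove => // y p yS yX yv pS pD ep; apply/negP => /bigcupP [w wW pDw].
  have yDw : y \notin D w by apply: contra yX => yD; apply/bigcupP; exists w.
  have pw : p = w by apply: (D_edge pDw yS yDw); rewrite esym.
  have := child_of_parent yS yv pS pD ep; rewrite pw => yD.
  by rewrite yD in yDw.
apply: (GL esym (G := GU W)).
- exact: subsetDl.
- by rewrite in_setD vX vS.
- apply/subsetP => x /GU_mem [w wW xG].
  have xD := Gw_D (subsetP WC w wW) xG.
  rewrite !in_setD (D_sub xD) !andbT negbK; by apply/bigcupP; exists w.
- move=> F dF; rewrite GU_card //.
  have FS : F \subset S by case/andP: dF.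
  rewrite (@dec_sum _ D W).
  + apply: leq_sum => w wW; apply: leq_trans (BW (subsetP WC w wW) dF).
    apply: subset_leq_card; apply/subsetP => y; rewrite !in_setI in_setD => /andP[/andP[_ ->] ->] //.
  + move=> w1 w2 y w1W w2W; exact: disjC (subsetP WC _ w1W) (subsetP WC _ w2W).
  move=> y; rewrite !in_setD negb_and negbK => /andP[/orP[yX|yS] yF]; last first.
    by rewrite (subsetP FS y yF) in yS.
  by case/bigcupP: yX => w wW yD; exists w.
- exact: GU_int.
- move=> x y /GU_mem [w wW xG] yS1; apply/negP => exy.
  have wC := subsetP WC w wW.
  have xD := Gw_D wC xG.
  move: yS1; rewrite in_setD => /andP[yX yS].
  have yDw : y \notin D w by apply: contra yX => yD; apply/bigcupP; exists w.
  have xw := D_edge xD yS yDw exy; subst x.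
  have /and4P[_ _ _ /implyP h] := Gw_good wC.
  have r := case2_mod (negbT cond) hz wW.
  by move: (h (introT eqP r)); rewrite xG.
Qed.

End Step.

End Tree.

Lemma pruning_Eq (T : finType) (e : rel T) (v : T) : symmetric e -> irreflexive e ->
  acyclic_in e [set: T] -> forall S Sb, pruning e v S Sb -> v \in S ->
  (forall x, x \in S -> connect (adj e S) v x) -> EqMD e v S Sb.
Proof.
move=> esym eirr eacyc S Sb; elim => {S Sb} [S _ _ _ | S S1 S2 st _ IH vS Sc].
  exact: EqMD_refl.
case: st => u [hub huv hmax hpa].
have [[vS1 Sc1] E1] := step_core esym eirr eacyc vS Sc hub huv hmax hpa.
exact: EqMD_trans E1 (IH vS1 Sc1).
Qed.

Unset Implicit Arguments.
Set Strict Implicit.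
Set Printing Implicit Defensive.

Theorem lemma3p1 (T : finType) (e : rel T) (v : T) (Tbar : {set T}) :
  symmetric e -> irreflexive e ->
  is_tree e [set: T] ->
  pruning e v [set: T] Tbar ->
  (forall Fb, max_dissociation e Tbar Fb ->
     exists F, max_dissociation e [set: T] F /\ (v \in F <-> v \in Fb)) /\
  (forall F, max_dissociation e [set: T] F ->
     exists Fb, max_dissociation e Tbar Fb /\ (v \in Fb <-> v \in F)).
Proof.
move=> esym eirr [_ [conn acyc]] pr.
have vS : v \in [set: T] by rewrite inE.
have := pruning_Eq esym eirr acyc pr vS (fun x xS => conn v x vS xS).
by [].
Qed.
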